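(* Let $X$ be a connected cubic graph and let $G\leq\mathrm{Aut}\,X$ be an $s$-regular group of automorphisms with $s\in\{1,4\}$. Then every connected $G$-split $2$-cover of $X$ is the canonical double cover of $X$.
   Context: Graphs are finite and simple; maps are composed on the right. An $s$-arc is a sequence $(v_0,\dots,v_s)$ of vertices with $v_{i-1}\sim v_i$ and $v_{i-1}\neq v_{i+1}$; $G$ is $s$-regular if it acts regularly on the set of $s$-arcs. A regular covering projection $\wp\colon\tilde X\to X$ is a surjective graph homomorphism, locally bijective on neighbourhoods, whose group $\mathrm{CT}(\wp)$ of covering transformations (automorphisms $c$ of $\tilde X$ with $c\wp=\wp$) acts regularly on fibres; a $2$-cover has $\mathrm{CT}(\wp)\cong\mathbb{Z}_2$. A lift of $g\in\mathrm{Aut}\,X$ is $\tilde g\in\mathrm{Aut}\,\tilde X$ with $\wp g=\tilde g\wp$; $\wp$ is a $G$-split $2$-cover if every element of $G$ lifts and $\mathrm{CT}(\wp)$ has a complement in the lifted group $\tilde G$ (the group of all lifts). The canonical double cover of $X$ is the projection $(u,i)\mapsto u$ from the graph on $V(X)\times\mathbb{Z}_2$ with $(u,i)\sim(v,i+1)$ whenever $u\sim v$ (up to isomorphism of covering projections). *)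

(* Defs.v *)
From mathcomp Require Import all_boot all_fingroup.
Set Implicit Arguments.
Unset Strict Implicit.
Unset Printing Implicit Defensive.
Local Open Scope group_scope.

Definition simple_graph (V : finType) (e : rel V) : Prop :=
  symmetric e /\ irreflexive e.

Definition connected (V : finType) (e : rel V) : Prop :=
  (0 < #|V|)%N /\ forall x y : V, connect e x y.

Definition cubic (V : finType) (e : rel V) : Prop :=
  forall x : V, #|[set y | e x y]| = 3%N.

Definition Aut_graph (V : finType) (e : rel V) : {set {perm V}} :=
  [set g : {perm V} | [forall x, forall y, e (g x) (g y) == e x y]].

Fixpoint nonbacktrack (V : eqType) (a : seq V) : bool :=
  match a with
  | x :: ((_ :: z :: _) as t) => (x != z) && nonbacktrack t
  | _ => true
  end.

Definition is_sarc (V : finType) (e : rel V) (s : nat) (a : seq V) : bool :=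
  (size a == s.+1) &&
  match a with
  | x :: t => path e x t && nonbacktrack a
  | [::] => false
  end.

Definition s_regular (V : finType) (e : rel V) (G : {set {perm V}}) (s : nat)
  : Prop :=
  forall a b : seq V, is_sarc e s a -> is_sarc e s b ->
    exists! g : {perm V}, g \in G /\ map g a = b.

Definition CT (W V : finType) (f : rel W) (p : W -> V) : {set {perm W}} :=
  [set c : {perm W} | (c \in Aut_graph f) && [forall w, p (c w) == p w]].

Definition regular_covering (V W : finType) (e : rel V) (f : rel W)
  (p : W -> V) : Prop :=
  [/\ forall v : V, exists w : W, p w = v,
      forall x y : W, f x y -> e (p x) (p y),
      forall w : W, {in [set y | f w y] &, injective p} /\
                    p @: [set y | f w y] = [set v | e (p w) v]
    & forall w1 w2 : W, p w1 = p w2 ->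
        exists! c : {perm W}, c \in CT f p /\ c w1 = w2].

(* 2-cover: CT(p) is isomorphic to Z_2, i.e. has order 2 *)
Definition two_cover (V W : finType) (e : rel V) (f : rel W) (p : W -> V)
  : Prop :=
  regular_covering e f p /\ #|CT f p| = 2%N.

(* tg is a lift of g: p g = tg p (maps composed on the right) *)
Definition is_lift (V W : finType) (e : rel V) (f : rel W) (p : W -> V)
  (g : {perm V}) (tg : {perm W}) : Prop :=
  tg \in Aut_graph f /\ forall w, p (tg w) = g (p w).

Definition lifted_group (V W : finType) (f : rel W) (p : W -> V)
  (G : {set {perm V}}) : {set {perm W}} :=
  [set tg : {perm W} | (tg \in Aut_graph f) &&
     [exists g in G, [forall w, p (tg w) == g (p w)]]].

Definition G_split (V W : finType) (e : rel V) (f : rel W) (p : W -> V)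
  (G : {set {perm V}}) : Prop :=
  (forall g, g \in G -> exists tg, is_lift e f p g tg) /\
  [complements to CT f p in lifted_group f p G] != set0.

Definition cdc_rel (V : finType) (e : rel V) : rel (V * bool) :=
  fun x y => e x.1 y.1 && (x.2 != y.2).

Definition is_canonical_double_cover (V W : finType) (e : rel V) (f : rel W)
  (p : W -> V) : Prop :=
  exists phi : W -> V * bool,
    [/\ bijective phi, forall x y, f x y = cdc_rel e (phi x) (phi y)
      & forall w, (phi w).1 = p w].

(* Main.v *)
Require Import Defs.
From mathcomp Require Import all_boot all_fingroup.
Set Implicit Arguments.
Unset Strict Implicit.
Unset Printing Implicit Defensive.
Local Open Scope group_scope.

Section Basic.
Variables (V : finType) (e : rel V).
Hypothesis ecub : cubic e.

Lemma gautE (g : {perm V}) x y : g \in Aut_graph e -> e (g x) (g y) = e x y.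
Proof. by rewrite inE => /forallP /(_ x) /forallP /(_ y) /eqP. Qed.

Lemma nb3 x y1 y2 y3 z : e x y1 -> e x y2 -> e x y3 -> y1 != y2 -> y1 != y3 -> y2 != y3 ->
  e x z -> [|| z == y1, z == y2 | z == y3].
Proof.
move=> e1 e2 e3 n12 n13 n23 ez; apply/negPn/negP; rewrite !negb_or => /and3P [a b c].
have : #|[set z; y1; y2; y3]| <= #|[set z | e x z]|.
  by apply: subset_leq_card; apply/subsetP=> t; rewrite !inE; case: eqP => [->//|_]; case: eqP => [->//|_]; case: eqP => [->//|_]; by move/eqP->.
have -> : [set z; y1; y2; y3] = z |: (y1 |: (y2 |: [set y3])) by rewrite !setUA.
rewrite ecub !cardsU1 cards1 !inE !negb_or a b c n12 n13 n23.
done.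
Qed.

Lemma other2 x y : e x y -> exists y1 y2, [/\ e x y1, e x y2, y1 != y2, y1 != y & y2 != y].
Proof.
move=> exy.
have : #|[set z | e x z] :\ y| == 2.
  have := cardsD1 y [set z | e x z]; rewrite (ecub x) inE exy /= => /eqP.
  by rewrite eqSS eq_sym.
case/cards2P=> y1 [y2 [ne12 E]].
have : y1 \in [set z | e x z] :\ y by rewrite E !inE eqxx.
have : y2 \in [set z | e x z] :\ y by rewrite E !inE eqxx orbT.
rewrite !inE => /andP [n2 e2] /andP [n1 e1].
by exists y1, y2; split.
Qed.

Lemma other1 x y1 y2 : e x y1 -> e x y2 -> y1 != y2 ->
  exists y3, [/\ e x y3, y3 != y1 & y3 != y2].
Proof.
move=> e1 e2 n12; have [a [b [ea eb nab na1 nb1]]] := other2 e1.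
case: (eqVneq a y2) => [ay2|ay2]; last by exists a.
exists b; split=> //; by rewrite -ay2 eq_sym.
Qed.

Lemma perm3 (g : {perm V}) x y1 y2 y3 : g \in Aut_graph e -> g x = x ->
  e x y1 -> e x y2 -> e x y3 -> y1 != y2 -> y1 != y3 -> y2 != y3 ->
  g y1 = y1 -> g y2 = y2 -> g y3 = y3.
Proof.
move=> ga gx e1 e2 e3 n12 n13 n23 g1 g2.
have e3' : e x (g y3) by rewrite -{1}gx gautE.
have := nb3 e1 e2 e3 n12 n13 n23 e3'.
case/or3P=> /eqP // H.
  by move: n13; rewrite -(inj_eq (@perm_inj _ g)) H g1 eqxx.
by move: n23; rewrite -(inj_eq (@perm_inj _ g)) H g2 eqxx.
Qed.

Lemma perm3' (g : {perm V}) x y1 y2 y3 : g \in Aut_graph e -> g x = x ->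
  e x y1 -> e x y2 -> e x y3 -> y1 != y2 -> y1 != y3 -> y2 != y3 ->
  g y1 = y1 -> g y2 = y3 -> g y3 = y2.
Proof.
move=> ga gx e1 e2 e3 n12 n13 n23 g1 g2.
have e3' : e x (g y3) by rewrite -{1}gx gautE.
have := nb3 e1 e2 e3 n12 n13 n23 e3'.
case/or3P=> /eqP // H.
  by move: n13; rewrite -(inj_eq (@perm_inj _ g)) H g1 eqxx.
by move: n23; rewrite -(inj_eq (@perm_inj _ g)) H g2 eqxx.
Qed.

End Basic.


Lemma sarc4E (V : finType) (e : rel V) a b c d x : is_sarc e 4 [:: a; b; c; d; x] =
  [&& e a b, e b c, e c d, e d x, a != c, b != d & c != x].
Proof. by rewrite /is_sarc /= !andbT -!andbA. Qed.
Lemma sarc1E (V : finType) (e : rel V) a b : is_sarc e 1 [:: a; b] = e a b.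
Proof. by rewrite /is_sarc /= !andbT. Qed.

Section Conn.
Variables (V : finType) (e : rel V).
Lemma conn_ind (P : V -> Prop) x y : P x -> (forall a b, e a b -> P a -> P b) ->
  connect e x y -> P y.
Proof.
move=> Px step /connectP [pth]; elim: pth x Px => [|a t IH] x Px /=; first by move=> _ ->.
by case/andP=> exa pt yE; apply: (IH a (step _ _ exa Px) pt yE).
Qed.
End Conn.

Section Arc4.
Variables (V : finType) (e : rel V) (G : {group {perm V}}).
Hypothesis esym : symmetric e.
Hypothesis ecub : cubic e.
Hypothesis GA : G \subset Aut_graph e.
Hypothesis sreg : s_regular e G 4.

Definition arc4 a b c d x := [&& e a b, e b c, e c d, e d x, a != c, b != d & c != x].

Lemma GAut g : g \in G -> g \in Aut_graph e.
Proof. by move/(subsetP GA). Qed.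

Lemma reg4_ex a b c d x a' b' c' d' x' : arc4 a b c d x -> arc4 a' b' c' d' x' ->
  exists2 g, g \in G & [/\ g a = a', g b = b', g c = c', g d = d' & g x = x'].
Proof.
move=> h1 h2; have [g [[gG /= E] _]] := sreg (a:=[:: a; b; c; d; x]) (b:= [:: a'; b'; c'; d'; x'])
  ltac:(by rewrite sarc4E) ltac:(by rewrite sarc4E).
by case: E => *; exists g.
Qed.

Lemma reg4_uniq g1 g2 a b c d x : arc4 a b c d x -> g1 \in G -> g2 \in G ->
  g1 a = g2 a -> g1 b = g2 b -> g1 c = g2 c -> g1 d = g2 d -> g1 x = g2 x -> g1 = g2.
Proof.
move=> h G1 G2 ea eb ec ed ex.
have h1 : is_sarc e 4 [:: a; b; c; d; x] by rewrite sarc4E.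
have h2 : is_sarc e 4 [:: g1 a; g1 b; g1 c; g1 d; g1 x].
  by rewrite sarc4E !(gautE _ _ (GAut G1)) !(inj_eq (@perm_inj _ g1)).
have [g [_ U]] := sreg h1 h2.
have E1 : g = g1 by apply: U; split.
have E2 : g = g2 by apply: U; split => //=; rewrite ea eb ec ed ex.
by rewrite -E1 -E2.
Qed.


Lemma reg4_id g a b c d x : arc4 a b c d x -> g \in G ->
  g a = a -> g b = b -> g c = c -> g d = d -> g x = x -> g = 1.
Proof.
move=> h gG *; apply: (reg4_uniq h gG (group1 G)); by rewrite perm1.
Qed.

Lemma nb_ex x : exists y, e x y.
Proof.
have : 0 < #|[set y | e x y]| by rewrite ecub.
by case/card_gt0P => y; rewrite inE; exists y.
Qed.

Lemma arc_from x : exists u c d q, arc4 x u c d q.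
Proof.
have [u exu] := nb_ex x.
have [c [_ [euc _ _ ncx _]]] := other2 ecub (y:=x) (x:=u) ltac:(by rewrite esym).
have [d [_ [ecd _ _ ndu _]]] := other2 ecub (y:=u) (x:=c) ltac:(by rewrite esym).
have [q [_ [edq _ _ nqc _]]] := other2 ecub (y:=c) (x:=d) ltac:(by rewrite esym).
exists u, c, d, q; rewrite /arc4 exu euc ecd edq eq_sym ncx eq_sym ndu eq_sym nqc.
done.
Qed.

Lemma trans4 x y : exists2 r, r \in G & r x = y.
Proof.
have [u [c [d [q h1]]]] := arc_from x.
have [u' [c' [d' [q' h2]]]] := arc_from y.
have [r rG [? _ _ _ _]] := reg4_ex h1 h2; by exists r.
Qed.

Lemma img3 g x y1 y2 y3 y : g \in G -> g x = x -> e x y1 -> e x y2 -> e x y3 ->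
  y1 != y2 -> y1 != y3 -> y2 != y3 -> e x y -> [|| g y == y1, g y == y2 | g y == y3].
Proof.
move=> gG gx e1 e2 e3 n12 n13 n23 ey; apply: (nb3 ecub e1 e2 e3) => //.
by rewrite -{1}gx gautE // GAut.
Qed.

End Arc4.


Section Core4.
Variables (V : finType) (e : rel V) (G : {group {perm V}}).
Hypothesis esym : symmetric e.
Hypothesis ecub : cubic e.
Hypothesis GA : G \subset Aut_graph e.
Hypothesis sreg : s_regular e G 4.
Hypothesis conn : forall x y, connect e x y.
Variable fx : V -> {perm V} -> bool.
Hypothesis H1 : forall v g1 g2, g1 \in G -> g2 \in G -> g1 v = v -> g2 v = v ->
  fx v (g1 * g2) = (fx v g1 == fx v g2).
Hypothesis H2 : forall v u g, g \in G -> e v u -> g v = v -> g u = u -> fx v g = fx u g.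
Hypothesis H3 : forall v g r, g \in G -> r \in G -> g v = v -> fx (r v) (g ^ r) = fx v g.

Let GAut := GAut GA.

Lemma fx1 v : fx v 1.
Proof. by have := @H1 v 1 1 (group1 G) (group1 G) (perm1 v) (perm1 v); rewrite mulg1 eqxx. Qed.

Lemma fxsq v g : g \in G -> g v = v -> fx v (g * g).
Proof. by move=> gG gv; rewrite H1 ?eqxx. Qed.

Lemma sq_case v ui uj ai ai' aj aj' k :
  e v ui -> e v uj -> ui != uj ->
  e ui ai -> e ui ai' -> ai != ai' -> ai != v -> ai' != v ->
  e uj aj -> e uj aj' -> aj != aj' -> aj != v -> aj' != v ->
  k \in G -> k v = v -> k ui = ui -> k uj = uj -> k ai = ai' -> k aj = aj' -> fx v k.
Proof.
move=> evi evj nij ei ei' nai nai1 nai2 ej ej' naj naj1 naj2 kG kv kui kuj kai kaj.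
have h1 : arc4 e ai ui v uj aj.
  by rewrite /arc4 (esym ai) ei (esym ui) evi evj ej nai1 nij eq_sym naj1.
have h2 : arc4 e aj uj v ui ai'.
  by rewrite /arc4 (esym aj) ej (esym uj) evj evi ei' naj1 eq_sym nij eq_sym nai2.
have [g gG [g1 g2 g3 g4 g5]] := reg4_ex sreg h1 h2.
have g6 : g ai' = aj'.
  have ej3 : e uj (g ai') by rewrite -g2 gautE ?GAut.
  have evj' : e uj v by rewrite esym.
  have := nb3 ecub evj' ej ej' (ltac:(by rewrite eq_sym)) (ltac:(by rewrite eq_sym)) naj ej3.
  case/or3P=> /eqP // H.
    by move: nai2; rewrite -(inj_eq (@perm_inj _ g)) H g3 eqxx.
  by move: nai; rewrite -(inj_eq (@perm_inj _ g)) H g1 eqxx.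
have -> : k = g * g.
  apply: (reg4_uniq GA sreg h1 kG (groupM gG gG)); rewrite permM.
  - by rewrite g1 g5.
  - by rewrite g2 g4.
  - by rewrite g3 g3.
  - by rewrite g4 g2.
  - by rewrite g5 g6.
exact: fxsq.
Qed.


Lemma kcase u v a a' k : e u v -> e u a -> e u a' -> a != a' -> a != v -> a' != v ->
  k \in G -> k u = u -> k v = v -> k a = a \/ k a = a'.
Proof.
move=> euv ea ea' naa nav na'v kG ku kv.
have := img3 ecub GA kG ku euv ea ea' (ltac:(by rewrite eq_sym)) (ltac:(by rewrite eq_sym)) naa ea.
case/or3P=> /eqP H; [|by left|by right].
by move: nav; rewrite -(inj_eq (@perm_inj _ k)) H kv eqxx.
Qed.

Lemma two_fix v ui uj ai aj k : e v ui -> e v uj -> ui != uj -> e ui ai -> ai != v ->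
  e uj aj -> aj != v -> k \in G -> k ai = ai -> k ui = ui -> k v = v -> k uj = uj ->
  k aj = aj -> k = 1.
Proof.
move=> evi evj nij ei nai ej naj kG ????.
apply: (reg4_id GA sreg (a:=ai) (b:=ui) (c:=v) (d:=uj) (x:=aj)) => //.
by rewrite /arc4 (esym ai) ei (esym ui) evi evj ej nai nij eq_sym naj.
Qed.

Lemma F1 v k : k \in G -> k v = v -> (forall u, e v u -> k u = u) -> fx v k.
Proof.
move=> kG kv kN.
have [u1 e1] := nb_ex ecub v.
have [u2 [u3 [e2 e3 n23 n21 n31]]] := other2 ecub e1.
have nbr i : e v i -> exists a a', [/\ e i a, e i a', a != a', a != v & a' != v].
  move=> evi; have [a [a' [? ? ? ? ?]]] := other2 ecub (x:=i) (y:=v) (ltac:(by rewrite esym)).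
  by exists a, a'.
have [a1 [a1' [f1 f1' m1 m1v m1v']]] := nbr _ e1.
have [a2 [a2' [f2 f2' m2 m2v m2v']]] := nbr _ e2.
have [a3 [a3' [f3 f3' m3 m3v m3v']]] := nbr _ e3.
have b1 : e u1 v by rewrite esym.
have K1 := kcase b1 f1 f1' m1 m1v m1v' kG (kN _ e1) kv.
have b2 : e u2 v by rewrite esym.
have K2 := kcase b2 f2 f2' m2 m2v m2v' kG (kN _ e2) kv.
have b3 : e u3 v by rewrite esym.
have K3 := kcase b3 f3 f3' m3 m3v m3v' kG (kN _ e3) kv.
have n12 : u1 != u2 by rewrite eq_sym.
have n13 : u1 != u3 by rewrite eq_sym.
have k1 := kN _ e1; have k2 := kN _ e2; have k3 := kN _ e3.
case: K1 => K1; case: K2 => K2.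
- by rewrite (two_fix e1 e2 n12 f1 m1v f2 m2v kG) ?fx1.
- case: K3 => K3.
  + by rewrite (two_fix e1 e3 n13 f1 m1v f3 m3v kG) ?fx1.
  + exact: (sq_case e2 e3 n23 f2 f2' m2 m2v m2v' f3 f3' m3 m3v m3v' kG).
- case: K3 => K3.
  + by rewrite (two_fix e2 e3 n23 f2 m2v f3 m3v kG) ?fx1.
  + exact: (sq_case e1 e3 n13 f1 f1' m1 m1v m1v' f3 f3' m3 m3v m3v' kG).
- exact: (sq_case e1 e2 n12 f1 f1' m1 m1v m1v' f2 f2' m2 m2v m2v' kG).
Qed.


Lemma LA_step u v x1 x2 w g : e u v -> e u x1 -> e u x2 -> v != x1 -> v != x2 -> x1 != x2 ->
  w \in G -> w u = u -> fx u w -> g \in G -> g u = u -> g v = w v -> g x1 = w x1 -> fx u g.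
Proof.
move=> ev e1 e2 n1 n2 n12 wG wu fw gG gu gv gx.
set m := g * w^-1.
have mG : m \in G by rewrite groupM ?groupV.
have wiu : w^-1 u = u by rewrite -{1}wu permK.
have mu : m u = u by rewrite permM gu wiu.
have mv : m v = v by rewrite permM gv permK.
have mx : m x1 = x1 by rewrite permM gx permK.
have mx2 : m x2 = x2 by apply: (perm3 ecub (GAut mG) mu ev e1 e2 n1 n2 n12 mv mx).
have fm : fx u m.
  apply: F1 => // y ey; have := nb3 ecub ev e1 e2 n1 n2 n12 ey.
  by case/or3P=> /eqP ->.
have -> : g = m * w by rewrite /m mulgKV.
by rewrite H1 ?fm ?fw.
Qed.

Lemma LA u v x1 x2 t : e u v -> e u x1 -> e u x2 -> v != x1 -> v != x2 -> x1 != x2 ->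
  t \in G -> t u = u -> t v = v -> t x1 = x2 -> fx u t ->
  forall g, g \in G -> g u = u -> fx u g.
Proof.
move=> ev e1 e2 n1 n2 n12 tG tu tv tx ft g gG gu.
have [y [_ [evy _ _ nyu _]]] := other2 ecub (x:=v) (y:=u) (ltac:(by rewrite esym)).
have [q [_ [eq1 _ _ nqu _]]] := other2 ecub (x:=x1) (y:=u) (ltac:(by rewrite esym)).
have h1 : arc4 e y v u x1 q.
  by rewrite /arc4 (esym y) evy (esym v) ev e1 eq1 nyu n1 eq_sym nqu.
have h2 : arc4 e q x1 u v y.
  by rewrite /arc4 (esym q) eq1 (esym x1) e1 ev evy nqu eq_sym n1 eq_sym nyu.
have [r rG [_ rv ru rx _]] := reg4_ex sreg h1 h2.
have rx2 : r x2 = x2.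
  have := img3 ecub GA rG ru ev e1 e2 n1 n2 n12 e2.
  case/or3P=> /eqP // H.
    by move: n12; rewrite -(inj_eq (@perm_inj _ r)) H rx eqxx.
  by move: n2; rewrite -(inj_eq (@perm_inj _ r)) H rv eqxx.
have tx2 : t x2 = x1 by apply: (perm3' ecub (GAut tG) tu ev e1 e2 n1 n2 n12 tv tx).
set t' := t ^ r.
have t'G : t' \in G by rewrite groupJ.
have app z : t' z = r (t (r^-1 z)) by rewrite /t' conjgE !permM.
have riv : r^-1 x1 = v by rewrite -rv permK.
have rix : r^-1 v = x1 by rewrite -rx permK.
have riu : r^-1 u = u by rewrite -{1}ru permK.
have rix2 : r^-1 x2 = x2 by rewrite -{1}rx2 permK.
have t'u : t' u = u by rewrite app riu tu ru.
have t'v : t' v = x2 by rewrite app rix tx rx2.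
have t'x : t' x1 = x1 by rewrite app riv tv rv.
have t'x2 : t' x2 = v by rewrite app rix2 tx2 rx.
have ft' : fx u t' by have := H3 (v:=u) tG rG tu; rewrite ru /t' => ->.
clearbody t'.
have st w : w \in G -> w u = u -> fx u w -> g v = w v -> g x1 = w x1 -> fx u g.
  by move=> wG wu fw; apply: (LA_step ev e1 e2 n1 n2 n12 wG wu fw gG gu).
have fM a b : a \in G -> b \in G -> a u = u -> b u = u -> fx u a -> fx u b ->
   [/\ a * b \in G, (a * b) u = u & fx u (a * b)].
  by move=> aG bG au bu fa fb; rewrite groupM // permM au bu H1 // fa fb.
have [ttG ttu ftt] := fM _ _ tG t'G tu t'u ft ft'.
have [t'tG t'tu ft't] := fM _ _ t'G tG t'u tu ft' ft.
have [tttG tttu fttt] := fM _ _ ttG tG ttu tu ftt ft.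
have gv := img3 ecub GA gG gu ev e1 e2 n1 n2 n12 ev.
have gx := img3 ecub GA gG gu ev e1 e2 n1 n2 n12 e1.
case/or3P: gv => /eqP gv; case/or3P: gx => /eqP gx.
- by move: n1; rewrite -(inj_eq (@perm_inj _ g)) gv gx eqxx.
- by apply: (st 1) => //; rewrite ?group1 ?perm1 ?fx1.
- by apply: (st t) => //; rewrite ?tv ?tx.
- by apply: (st _ tttG tttu fttt); rewrite !permM; do 3 rewrite ?tv ?t'v ?tx ?tx2 ?t'x ?t'x2.
- by move: n1; rewrite -(inj_eq (@perm_inj _ g)) gv gx eqxx.
- by apply: (st _ t'tG t'tu ft't); rewrite !permM; do 3 rewrite ?tv ?t'v ?tx ?tx2 ?t'x ?t'x2.
- by apply: (st _ ttG ttu ftt); rewrite !permM; do 3 rewrite ?tv ?t'v ?tx ?tx2 ?t'x ?t'x2.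
- by apply: (st _ t'G t'u ft'); rewrite ?t'v ?t'x.
- by move: n1; rewrite -(inj_eq (@perm_inj _ g)) gv gx eqxx.
Qed.


Lemma core4 v g : g \in G -> g v = v -> fx v g.
Proof.
move=> gG gv; case: (boolP (fx v g)) => // nf; exfalso.
have bad u : exists2 h, h \in G & h u = u /\ ~~ fx u h.
  have [r rG rv] := trans4 esym ecub sreg v u.
  exists (g ^ r); first by rewrite groupJ.
  split; first by rewrite conjgE !permM -rv permK gv.
  by rewrite -rv H3.
have st2 u w x1 x2 t : e u w -> e u x1 -> e u x2 -> w != x1 -> w != x2 -> x1 != x2 ->
    t \in G -> t u = u -> t w = w -> t x1 = x2 -> ~~ fx u t.
  move=> ew e1 e2 n1 n2 n12 tG tu tw tx; apply/negP => ft.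
  have [h hG [hu nh]] := bad u.
  by move: nh; rewrite (LA ew e1 e2 n1 n2 n12 tG tu tw tx ft hG hu).
have [u0 e0] := nb_ex ecub v.
have [x [x' [ex ex' nxx nxu nx'u]]] := other2 ecub e0.
have [y [_ [ey _ _ nyv _]]] := other2 ecub (x:=u0) (y:=v) (ltac:(by rewrite esym)).
have [q [q' [eq eq' nqq nqu nq'u]]] := other2 ecub (x:=y) (y:=u0) (ltac:(by rewrite esym)).
have h1 : arc4 e x v u0 y q.
  by rewrite /arc4 (esym x) ex e0 ey eq nxu eq_sym nyv eq_sym nqu.
have h2 : arc4 e x v u0 y q'.
  by rewrite /arc4 (esym x) ex e0 ey eq' nxu eq_sym nyv eq_sym nq'u.
have [z zG [zx zv zu zy zq]] := reg4_ex sreg h1 h2.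
pose P a := z a = a /\ forall b, e a b -> z b = b.
have Pv : P v.
  split=> // b eb.
  have zx' : z x' = x' by apply: (perm3 ecub (GAut zG) zv e0 ex ex' _ _ nxx zu zx); rewrite eq_sym.
  have := nb3 ecub e0 ex ex' (ltac:(by rewrite eq_sym)) (ltac:(by rewrite eq_sym)) nxx eb.
  by case/or3P=> /eqP ->.
have step a b : e a b -> P a -> P b.
  move=> eab [za zN]; have zb := zN _ eab; split=> //.
  have eba : e b a by rewrite esym.
  have [b1 [b2 [e1 e2 n12 n1 n2]]] := other2 ecub eba.
  have n1' : a != b1 by rewrite eq_sym.
  have n2' : a != b2 by rewrite eq_sym.
  case: (kcase eba e1 e2 n12 n1 n2 zG zb za) => zb1.
    have zb2 : z b2 = b2 by apply: (perm3 ecub (GAut zG) zb eba e1 e2 n1' n2' n12 za zb1).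
    move=> c ec; have := nb3 ecub eba e1 e2 n1' n2' n12 ec.
    by case/or3P=> /eqP ->.
  have := st2 b a b1 b2 z eba e1 e2 n1' n2' n12 zG zb za zb1.
  by rewrite -(H2 zG eab za zb) (F1 zG za zN).
have allP a : P a by apply: (conn_ind Pv step (conn v a)).
have z1 : z = 1 by apply/permP => a; rewrite perm1; case: (allP a).
by move: nqq; rewrite -zq z1 perm1 eqxx.
Qed.

End Core4.

Section Core1.
Variables (V : finType) (e : rel V) (G : {group {perm V}}).
Hypothesis esym : symmetric e.
Hypothesis ecub : cubic e.
Hypothesis GA : G \subset Aut_graph e.
Hypothesis sreg : s_regular e G 1.
Variable fx : V -> {perm V} -> bool.
Hypothesis H1 : forall v g1 g2, g1 \in G -> g2 \in G -> g1 v = v -> g2 v = v ->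
  fx v (g1 * g2) = (fx v g1 == fx v g2).

Lemma reg1_id g v u : g \in G -> e v u -> g v = v -> g u = u -> g = 1.
Proof.
move=> gG evu gv gu.
have h : is_sarc e 1 [:: v; u] by rewrite sarc1E.
have [k [_ U]] := sreg h h.
have E1 : k = g by apply: U; split => //=; rewrite gv gu.
have E2 : k = 1 by apply: U; split => //=; rewrite ?group1 ?perm1.
by rewrite -E1 E2.
Qed.

Lemma fx1' v : fx v 1.
Proof. by have := @H1 v 1 1 (group1 G) (group1 G) (perm1 v) (perm1 v); rewrite mulg1 eqxx. Qed.

Lemma cyc3 v a b c g : g \in G -> g v = v -> e v a -> g a = b -> g b = c -> g c = a -> fx v g.
Proof.
move=> gG gv ea ga gb gc.
have g3 : g * g * g = 1.
  apply: (reg1_id (v:=v) (u:=a)) => //; rewrite ?groupM //.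
    by rewrite !permM !gv.
  by rewrite !permM ga gb gc.
have ggv : (g * g) v = v by rewrite permM !gv.
have E := @H1 v (g * g) g (groupM gG gG) gG ggv gv.
rewrite g3 fx1' (@H1 v g g gG gG gv gv) eqxx in E.
by move: E; case: (fx v g).
Qed.

Lemma core1 v g : g \in G -> g v = v -> fx v g.
Proof.
move=> gG gv.
have [u1 e1] := nb_ex ecub v.
have [u2 [u3 [e2 e3 n23 n21 n31]]] := other2 ecub e1.
have n12 : u1 != u2 by rewrite eq_sym.
have n13 : u1 != u3 by rewrite eq_sym.
have i1 := img3 ecub GA gG gv e1 e2 e3 n12 n13 n23 e1.
have i2 := img3 ecub GA gG gv e1 e2 e3 n12 n13 n23 e2.
have i3 := img3 ecub GA gG gv e1 e2 e3 n12 n13 n23 e3.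
have inj a b : a != b -> g a = g b -> False.
  by move=> nab E; move: nab; rewrite -(inj_eq (@perm_inj _ g)) E eqxx.
case/or3P: i1 => /eqP i1; case/or3P: i2 => /eqP i2; case/or3P: i3 => /eqP i3;
  first [ by rewrite (reg1_id gG e1 gv i1) fx1'
        | by rewrite (reg1_id gG e2 gv i2) fx1'
        | by rewrite (reg1_id gG e3 gv i3) fx1'
        | by case: (inj _ _ n12); rewrite i1 i2
        | by case: (inj _ _ n13); rewrite i1 i3
        | by case: (inj _ _ n23); rewrite i2 i3
        | by apply: (cyc3 gG gv e1 i1 i2 i3)
        | by apply: (cyc3 gG gv e1 i1 i3 i2)
        | idtac ].
Qed.
End Core1.


Section Cover.
Variables (V : finType) (e : rel V) (G : {group {perm V}}).
Variables (W : finType) (f : rel W) (p : W -> V).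
Hypothesis cov : regular_covering e f p.
Hypothesis ct2 : #|CT f p| = 2.
Variable c : {perm W}.
Hypothesis cCT : c \in CT f p.
Hypothesis c1 : c != 1.
Variable K : {group {perm W}}.
Hypothesis KCT : CT f p :&: K = 1.
Hypothesis KL : CT f p * K = lifted_group f p G.
Hypothesis glift : forall g, g \in G -> exists tg, is_lift e f p g tg.

Lemma psurj v : exists w, p w = v.
Proof. by case: cov. Qed.
Lemma phom x y : f x y -> e (p x) (p y).
Proof. by case: cov => _ H _ _; apply: H. Qed.
Lemma ploc_inj w x y : f w x -> f w y -> p x = p y -> x = y.
Proof. case: cov => _ _ H _; case: (H w) => I _ fx fy; apply: I; by rewrite inE. Qed.
Lemma ploc_img w u : e (p w) u -> exists2 y, f w y & p y = u.
Proof.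
case: cov => _ _ H _; case: (H w) => _ E eu.
have : u \in p @: [set y | f w y] by rewrite E inE.
by case/imsetP => y; rewrite inE => fy ->; exists y.
Qed.

Lemma CTP d : d \in CT f p -> d \in Aut_graph f /\ forall w, p (d w) = p w.
Proof. by rewrite inE => /andP [-> /forallP H]; split => // w; apply/eqP. Qed.

Lemma cA : c \in Aut_graph f. Proof. by case: (CTP cCT). Qed.
Lemma cp w : p (c w) = p w. Proof. by case: (CTP cCT). Qed.

Lemma CT1 : 1 \in CT f p.
Proof.
rewrite inE; apply/andP; split; last by apply/forallP => w; rewrite perm1.
by rewrite inE; apply/forallP => x; apply/forallP => y; rewrite !perm1.
Qed.

Lemma CTE : CT f p = [set 1; c].
Proof.
have sub : [set 1; c] \subset CT f p.
  by apply/subsetP => d; case/set2P => ->; rewrite ?CT1.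
have E : [set 1; c] == CT f p.
  by rewrite eqEcard sub ct2 cards2 eq_sym c1.
exact: esym (eqP E).
Qed.

Lemma cfix w : c w != w.
Proof.
apply/eqP => cw; case: cov => _ _ _ H; case: (H w w erefl) => d [_ U].
have E1 := U c (conj cCT cw).
have E2 := U 1 (conj CT1 (perm1 w)).
by move: c1; rewrite -E1 E2 eqxx.
Qed.

Lemma fib w y : p y = p w -> y = w \/ y = c w.
Proof.
move=> pyw; case: cov => _ _ _ H; case: (H w y (esym pyw)) => d [[dCT dw] _].
by move: dCT; rewrite CTE !inE => /orP [] /eqP dE; [left|right]; rewrite -dw dE ?perm1.
Qed.

Lemma cc w : c (c w) = w.
Proof.
have [//|E] := fib (w:=w) (y:=c (c w)) (ltac:(by rewrite !cp)).
by move: (cfix w); rewrite (perm_inj E) eqxx.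
Qed.

Lemma comm_c (k : {perm W}) (g : {perm V}) : (forall w, p (k w) = g (p w)) ->
  forall w, k (c w) = c (k w).
Proof.
move=> kg w; have [E|//] := fib (w:=k w) (y:=k (c w)) (ltac:(by rewrite !kg cp)).
by move: (cfix w); rewrite (perm_inj E) eqxx.
Qed.


Lemma KLm k : k \in K -> k \in lifted_group f p G.
Proof. by move=> kK; rewrite -KL; apply/mulsgP; exists 1 k; rewrite ?CT1 ?mul1g. Qed.

Lemma Klift k : k \in K -> k \in Aut_graph f /\ exists2 g, g \in G & forall w, p (k w) = g (p w).
Proof.
move/KLm; rewrite inE => /andP [kA /exists_inP [g gG /forallP H]]; split => //.
by exists g => // w; apply/eqP.
Qed.

Lemma KA k : k \in K -> k \in Aut_graph f. Proof. by case/Klift. Qed.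

Lemma gliftK g : g \in G -> exists2 k, k \in K & forall w, p (k w) = g (p w).
Proof.
move=> gG; have [tg [tgA tgp]] := glift gG.
have : tg \in lifted_group f p G.
  rewrite inE tgA; apply/exists_inP; exists g => //; apply/forallP => w; exact/eqP.
rewrite -KL => /mulsgP [a k aCT kK tgE]; exists k => // w.
have [_ ap] := CTP aCT.
have := tgp (a^-1 w); rewrite tgE permM permKV => ->.
by rewrite -{2}(permKV a w) ap.
Qed.

Lemma pinv (k : {perm W}) (g : {perm V}) : (forall w, p (k w) = g (p w)) ->
  forall w, p (k^-1 w) = g^-1 (p w).
Proof. by move=> H w; have := H (k^-1 w); rewrite permKV => ->; rewrite permK. Qed.

Lemma lift_uniq k1 k2 (g : {perm V}) : k1 \in K -> k2 \in K -> (forall w, p (k1 w) = g (p w)) ->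
  (forall w, p (k2 w) = g (p w)) -> k1 = k2.
Proof.
move=> k1K k2K h1 h2; set m := k1 * k2^-1.
have mK : m \in K by rewrite groupM ?groupV.
have mCT : m \in CT f p.
  rewrite inE KA //=; apply/forallP => w; rewrite permM (pinv h2) h1 permK //.
have : m \in CT f p :&: K by rewrite inE mCT mK.
rewrite KCT => /set1gP m1; apply/eqP; rewrite eq_mulgV1; exact/eqP.
Qed.

Definition lam (g : {perm V}) : {perm W} :=
  odflt 1 [pick k in K | [forall w, p (k w) == g (p w)]].

Lemma lamP g : g \in G -> lam g \in K /\ forall w, p (lam g w) = g (p w).
Proof.
move=> gG; rewrite /lam; case: pickP => [k /andP [kK /forallP H] | none] /=.
  by split => // w; apply/eqP.
have [k kK kp] := gliftK gG.
have := none k; rewrite kK /=; move/negbT/negP; case; apply/forallP => w; exact/eqP.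
Qed.

Lemma lamK g : g \in G -> lam g \in K. Proof. by case/lamP. Qed.
Lemma lamp g w : g \in G -> p (lam g w) = g (p w). Proof. by case/lamP=> _; apply. Qed.

Lemma lam_of k : k \in K -> exists2 g, g \in G & k = lam g.
Proof.
move=> kK; have [_ [g gG kp]] := Klift kK; exists g => //.
by apply: (lift_uniq kK (lamK gG) kp) => w; rewrite lamp.
Qed.

Lemma lamM g1 g2 : g1 \in G -> g2 \in G -> lam (g1 * g2) = lam g1 * lam g2.
Proof.
move=> G1 G2; apply: (lift_uniq (lamK (groupM G1 G2)) (groupM (lamK G1) (lamK G2))).
  by move=> w; rewrite lamp ?groupM.
by move=> w; rewrite !permM !lamp.
Qed.

Lemma lamV g : g \in G -> lam (g^-1) = (lam g)^-1.
Proof.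
move=> gG; apply: (lift_uniq (lamK (groupVr gG)) (groupVr (lamK gG))).
  by move=> w; rewrite lamp ?groupV.
by apply: pinv => w; rewrite lamp.
Qed.

Lemma lamc g w : g \in G -> lam g (c w) = c (lam g w).
Proof. by move=> gG; apply: (comm_c (g:=g)) => y; rewrite lamp. Qed.


Definition fxc (v : V) (g : {perm V}) : bool := [forall w, (p w == v) ==> (lam g w == w)].

Lemma lam_fib g w : g \in G -> g (p w) = p w -> lam g w = w \/ lam g w = c w.
Proof. by move=> gG gw; apply: fib; rewrite lamp. Qed.

Lemma fxE g v w : g \in G -> g v = v -> p w = v -> fxc v g = (lam g w == w).
Proof.
move=> gG gv pw; apply/idP/idP; first by move/forallP/(_ w); rewrite pw eqxx.
move=> /eqP lw; apply/forallP => y; apply/implyP => /eqP py.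
have [->|->] := fib (w:=w) (y:=y) (ltac:(by rewrite py pw)); first by rewrite lw.
by rewrite lamc // lw.
Qed.

Lemma H1c v g1 g2 : g1 \in G -> g2 \in G -> g1 v = v -> g2 v = v ->
  fxc v (g1 * g2) = (fxc v g1 == fxc v g2).
Proof.
move=> G1 G2 g1v g2v; have [w pw] := psurj v.
have g12v : (g1 * g2) v = v by rewrite permM g1v g2v.
rewrite !(fxE _ _ pw) ?groupM // lamM // permM.
have [->|->] := lam_fib (w:=w) G1 (ltac:(by rewrite pw g1v)); first by rewrite eqxx.
rewrite lamc // (negbTE (cfix w)) /=.
have [->|->] := lam_fib (w:=w) G2 (ltac:(by rewrite pw g2v)).
  by rewrite eqxx (negbTE (cfix w)).
by rewrite cc eqxx (negbTE (cfix w)).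
Qed.

Lemma H2c v u g : g \in G -> e v u -> g v = v -> g u = u -> fxc v g = fxc u g.
Proof.
move=> gG evu gv gu; have [w pw] := psurj v.
have [w' fww' pw'] := ploc_img (w:=w) (u:=u) (ltac:(by rewrite pw)).
rewrite (fxE gG gv pw) (fxE gG gu pw').
have kA := KA (lamK gG).
have fk : f (lam g w) (lam g w') by rewrite gautE.
have [E|E] := lam_fib (w:=w) gG (ltac:(by rewrite pw gv)); rewrite E in fk *.
  rewrite eqxx; apply/esym/eqP; apply: (ploc_inj fk fww').
  by rewrite lamp // pw' gu.
rewrite (negbTE (cfix w)).
have fc : f (c w) (c w') by rewrite gautE // cA.
have -> : lam g w' = c w' by apply: (ploc_inj fk fc); rewrite lamp // cp pw' gu.
by rewrite (negbTE (cfix w')).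
Qed.

Lemma H3c v g r : g \in G -> r \in G -> g v = v -> fxc (r v) (g ^ r) = fxc v g.
Proof.
move=> gG rG gv; have [w pw] := psurj v.
have grG : g ^ r \in G by rewrite groupJ.
have grv : (g ^ r) (r v) = r v by rewrite conjgE !permM permK gv.
rewrite (fxE gG gv pw) (fxE grG grv (w:=lam r w)); last by rewrite lamp // pw.
rewrite conjgE !lamM ?groupM ?groupV // lamV // !permM permK.
by rewrite (inj_eq (@perm_inj _ (lam r))).
Qed.


Hypothesis allfx : forall v g, g \in G -> g v = v -> fxc v g.
Hypothesis Gloc : forall v a b, e v a -> e v b -> exists2 r, r \in G & r v = v /\ r a = b.
Hypothesis Gtrans : forall x y, exists2 r, r \in G & r x = y.
Hypothesis fconn : forall x y, connect f x y.

Lemma claim2 k w : k \in K -> p (k w) = p w -> k w = w.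
Proof.
move=> kK; have [g gG ->] := lam_of kK => pk.
have gw : g (p w) = p w by rewrite -lamp.
by apply/eqP; rewrite -(fxE gG gw erefl); apply: allfx.
Qed.

Lemma claim1 k w : k \in K -> ~~ f w (k w).
Proof.
move=> kK; apply/negP => fw.
pose P y := exists2 k', k' \in K & y = k' w.
have nbrs b : f w b -> P b.
  move=> fb; have [r rG [rv ra]] := Gloc (phom fw) (phom fb).
  have lrw : lam r w = w by apply: claim2; rewrite ?lamK // lamp.
  have f1 : f w (lam r (k w)) by rewrite -{1}lrw gautE // KA // lamK.
  have E : lam r (k w) = b by apply: (ploc_inj f1 fb); rewrite lamp // ra.
  by exists (k * lam r); rewrite ?groupM ?lamK // permM.
have step a b : f a b -> P a -> P b.
  move=> fab [k1 k1K E1]; subst a.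
  have k1i : k1^-1 \in K by rewrite groupV.
  have : f w (k1^-1 b) by rewrite -{1}(permK k1 w) gautE // KA.
  case/nbrs => k2 k2K E; exists (k2 * k1); rewrite ?groupM // permM -E permKV //.
have [k' k'K E] : P (c w) by apply: (conn_ind (P:=P) _ step (fconn w (c w))); exists 1; rewrite ?group1 ?perm1.
have := claim2 (w:=w) k'K (ltac:(by rewrite -E cp)).
by rewrite -E => /eqP; rewrite (negbTE (cfix w)).
Qed.


Lemma Kc k w : k \in K -> k (c w) = c (k w).
Proof. by case/lam_of => g gG ->; rewrite lamc. Qed.

Lemma cdc_main (w0 : W) : is_canonical_double_cover e f p.
Proof.
pose O := [set k w0 | k : {perm W} in K].
have inO y : reflect (exists2 k, k \in K & y = k w0) (y \in O).
  by apply: (iffP imsetP) => [[k kK ->]|[k kK ->]]; exists k.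
have memOc w : (c w \in O) = ~~ (w \in O).
  case: (boolP (w \in O)) => wO /=.
    apply/negP => /inO [k2 k2K E2]; case/inO: wO => k1 k1K E1.
    have k2c : k2^-1 (c w) = c (k2^-1 w) by rewrite Kc ?groupV.
    have E4 : k2^-1 w = c w0.
      by rewrite -[k2^-1 w]cc -k2c E2 permK.
    have E3 : (k1 * k2^-1) w0 = c w0 by rewrite permM -E1 E4.
    have := claim2 (w:=w0) (groupM k1K (groupVr k2K)) (ltac:(by rewrite E3 cp)).
    by rewrite E3 => /eqP; rewrite (negbTE (cfix w0)).
  have [r rG rw] := Gtrans (p w0) (p w).
  have [E|E] := fib (w:=w) (y:=lam r w0) (ltac:(by rewrite lamp)).
    by case/negP: wO; apply/inO; exists (lam r) => //; rewrite lamK.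
  by apply/inO; exists (lam r) => //; rewrite lamK.
have nfO x y : x \in O -> y \in O -> ~~ f x y.
  case/inO => k1 k1K ->; case/inO => k2 k2K ->.
  have k1i : k1^-1 \in K by rewrite groupV.
  rewrite -(gautE _ _ (KA k1i)) permK; by have := @claim1 (k2 * k1^-1) w0 (groupM k2K k1i); rewrite permM.
have fO x y : f x y -> (x \in O) != (y \in O).
  move=> fxy; case: (boolP (x \in O)) => xO; case: (boolP (y \in O)) => yO //=.
    by have := nfO _ _ xO yO; rewrite fxy.
  have := nfO (c x) (c y); rewrite !memOc xO yO gautE ?cA // fxy.
  by move=> /(_ isT isT).
pose lift v := odflt w0 [pick w | p w == v].
have liftp v : p (lift v) = v.
  rewrite /lift; case: pickP => [w /eqP //|none].
  by have [w pw] := psurj v; have := none w; rewrite pw eqxx.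
pose phi w := (p w, w \in O).
pose psi (vb : V * bool) := if vb.2 == (lift vb.1 \in O) then lift vb.1 else c (lift vb.1).
exists phi; split.
- exists psi.
  + move=> w; rewrite /psi /phi /=.
    have [E|E] := fib (w:=w) (y:=lift (p w)) (liftp _); rewrite E.
      by rewrite eqxx.
    by rewrite memOc; case: (w \in O) => /=; rewrite cc.
  + move=> [v b]; rewrite /psi /phi /=.
    case: (boolP (b == (lift v \in O))) => [/eqP ->|nb]; first by rewrite liftp.
    by rewrite cp liftp memOc; move: nb; case: b; case: (lift v \in O).
- move=> x y; rewrite /cdc_rel /phi /=; apply/idP/idP.
    by move=> fxy; rewrite phom // fO.
  case/andP => exy dif.
  have [y' fy' py'] := ploc_img exy.
  have [E|E] := fib (w:=y) (y:=y') py'; first by rewrite -E.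
  by move: (fO _ _ fy'); rewrite E memOc; move: dif; case: (x \in O); case: (y \in O).
- by [].
Qed.

End Cover.

Lemma arc_from2 (V : finType) (e : rel V) (esym : symmetric e) (ecub : cubic e) x u :
  e x u -> exists c d q, arc4 e x u c d q.
Proof.
move=> exu.
have [c [_ [euc _ _ ncx _]]] := other2 ecub (y:=x) (x:=u) ltac:(by rewrite esym).
have [d [_ [ecd _ _ ndu _]]] := other2 ecub (y:=u) (x:=c) ltac:(by rewrite esym).
have [q [_ [edq _ _ nqc _]]] := other2 ecub (y:=c) (x:=d) ltac:(by rewrite esym).
exists c, d, q; rewrite /arc4 exu euc ecd edq eq_sym ncx eq_sym ndu eq_sym nqc.
done.
Qed.

Theorem theorem4p1 (V : finType) (e : rel V) (G : {group {perm V}}) (s : nat) :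
  simple_graph e -> connected e -> cubic e ->
  G \subset Aut_graph e -> (s = 1%N \/ s = 4%N) -> s_regular e G s ->
  forall (W : finType) (f : rel W) (p : W -> V),
    simple_graph f -> connected f ->
    two_cover e f p -> G_split e f p G ->
    is_canonical_double_cover e f p.
Proof.
move=> [esym _] [_ conn] ecub GA s14 sreg W f p _ [W0 fconn] [cov ct2] [glift spl].
have [w0 _] : exists w0 : W, true by move/card_gt0P: W0 => [w0 _]; exists w0.
have : #|CT f p :\ 1| == 1%N.
  by have := cardsD1 1 (CT f p); rewrite ct2 CT1 /= => -[->].
case/cards1P => c cE.
have : c \in CT f p :\ 1 by rewrite cE set11.
rewrite in_setD1 => /andP [c1 cCT].
case/set0Pn: spl => K; rewrite inE => /andP [/eqP KCT /eqP KL].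
have H1 := H1c cov ct2 cCT c1 KCT KL glift.
have H2 := H2c cov ct2 cCT c1 KL glift.
have H3 := H3c cov ct2 cCT c1 KCT KL glift.
case: s14 => ?; subst s.
- have Gloc : forall v a b, e v a -> e v b -> exists2 r, r \in G & r v = v /\ r a = b.
    move=> v a b ea eb.
    have h1 : is_sarc e 1 [:: v; a] by rewrite sarc1E.
    have h2 : is_sarc e 1 [:: v; b] by rewrite sarc1E.
    have [r [[rG [E1 E2]] _]] := sreg _ _ h1 h2; by exists r.
  have Gtrans : forall x y, exists2 r, r \in G & r x = y.
    move=> x y; have [a ea] := nb_ex ecub x; have [b eb] := nb_ex ecub y.
    have h1 : is_sarc e 1 [:: x; a] by rewrite sarc1E.
    have h2 : is_sarc e 1 [:: y; b] by rewrite sarc1E.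
    have [r [[rG [E1 E2]] _]] := sreg _ _ h1 h2; by exists r.
  have allfx v g : g \in G -> g v = v -> fxc p K v g.
    by move=> gG gv; apply: (core1 ecub GA sreg H1).
  exact: (cdc_main cov ct2 cCT c1 KCT KL glift allfx Gloc Gtrans fconn w0).
- have Gloc : forall v a b, e v a -> e v b -> exists2 r, r \in G & r v = v /\ r a = b.
    move=> v a b ea eb.
    have [c1' [d1 [q1 h1]]] := arc_from2 esym ecub ea.
    have [c2 [d2 [q2 h2]]] := arc_from2 esym ecub eb.
    have [r rG [? ? _ _ _]] := reg4_ex sreg h1 h2; by exists r.
  have allfx v g : g \in G -> g v = v -> fxc p K v g.
    by move=> gG gv; apply: (core4 esym ecub GA sreg conn H1 H2 H3).
  exact: (cdc_main cov ct2 cCT c1 KCT KL glift allfx Gloc (trans4 esym ecub sreg) fconn w0).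
Qed.
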